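(* Let $\Gamma$ be a countable simplicial graph (no loops or multiple edges) and for each vertex $v\in V(\Gamma)$ let $G_v$ be a finitely generated group with a finite generating set $S_v=S_v^{-1}$ not containing the identity. Fix an injective map $\bar w:V(\Gamma)\to\{1,2,3,\dots\}$ (a one-to-one correspondence with $\mathbb{N}$ when $\Gamma$ is infinite) and equip the graph product $\Gamma\mathfrak{G}$ with the left-invariant metric $d(g,h)=\|g^{-1}h\|$, where $\|\gamma\|=\inf\{\sum_i w(s_i)\mid \gamma=s_1\cdots s_m,\ s_i\in\bigsqcup_v S_v\}$ (and $\|e\|=0$), with $w(s)=\bar w(v)$ for $s\in S_v$. Let $r>0$, let $\Gamma_r$ be the full subgraph of $\Gamma$ on the vertex set $\bar w^{-1}([0,r])$, and let $\Gamma_r\mathfrak{G}$ be the subgroup of $\Gamma\mathfrak{G}$ generated by the $G_v$ with $v\in V(\Gamma_r)$. Then every element of $\Gamma\mathfrak{G}$ can be written in the form $xb$ with $x$ permissible and $b\in\Gamma_r\mathfrak{G}$. Moreover, if $x\neq x'$ are permissible, then $d(xb,x'b')>r$ for all $b,b'\in\Gamma_r\mathfrak{G}$.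
   Context: The graph product $\Gamma\mathfrak{G}$ of groups $\{G_v\}_{v\in V(\Gamma)}$ is the free product of the $G_v$ modulo the relations $gg'=g'g$ for all $g\in G_v$, $g'\in G_{v'}$ whenever $\{v,v'\}$ is an edge of $\Gamma$. An expression $g=g_1\cdots g_\ell$ is an expression in syllables if each $g_i$ is non-trivial and lies in a single vertex group, and no two consecutive $g_i,g_{i+1}$ lie in the same vertex group. An element $x\in\Gamma\mathfrak{G}$ is called permissible (with respect to $\Gamma_r$) if no reduced word in syllables presenting $x$ ends with a non-trivial syllable belonging to $\Gamma_r\mathfrak{G}$ (i.e. to a vertex group $G_v$ with $v\in V(\Gamma_r)$); the identity is considered permissible. *)

(* Defs.v *)
From Stdlib Require Import Relations.
From Stdlib Require List.
From mathcomp Require Import all_boot all_order all_algebra.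
From mathcomp Require Import reals.
Set Implicit Arguments. Unset Strict Implicit. Unset Printing Implicit Defensive.
Import Order.TTheory GRing.Theory Num.Theory.

Record group := Group {
  gcar :> Type;
  gmul : gcar -> gcar -> gcar;
  gone : gcar;
  ginv : gcar -> gcar;
  gmulA : associative gmul;
  gmul1 : left_id gone gmul;
  gmulV : left_inverse gone ginv gmul }.

Section GraphProduct.
Variables (V : countType) (adj : rel V) (G : V -> group).

Definition letter := {v : V & G v}.
Definition word := seq letter.

Inductive gp_step : word -> word -> Prop :=
| gp_del1 (u u' : word) (v : V) :
    gp_step (u ++ existT _ v (gone (G v)) :: u') (u ++ u')
| gp_merge (u u' : word) (v : V) (g h : G v) :
    gp_step (u ++ existT _ v g :: existT _ v h :: u')
            (u ++ existT _ v (gmul g h) :: u')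
| gp_comm (u u' : word) (v v' : V) (g : G v) (h : G v') :
    adj v v' ->
    gp_step (u ++ existT _ v g :: existT _ v' h :: u')
            (u ++ existT _ v' h :: existT _ v g :: u').

Definition gp_eq : word -> word -> Prop := clos_refl_sym_trans word gp_step.

Definition wmul (x y : word) : word := x ++ y.
Definition winv (x : word) : word :=
  rev (map (fun s : letter => existT _ (projT1 s) (ginv (projT2 s))) x).

Fixpoint syllable_adj (w : word) : Prop :=
  match w with
  | s :: ((s' :: _) as w') => projT1 s <> projT1 s' /\ syllable_adj w'
  | _ => True
  end.
Definition in_syllables (w : word) : Prop :=
  (forall s, List.In s w -> projT2 s <> gone (G (projT1 s))) /\ syllable_adj w.

Definition reduced (w : word) : Prop :=
  in_syllables w /\ forall w', gp_eq w w' -> (size w <= size w')%N.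

Variables (R : realType) (wbar : V -> nat) (r : R).

Definition in_Gamma_r (v : V) : Prop := ((wbar v)%:R <= r)%R.

Definition permissible (x : word) : Prop :=
  forall (w0 : word) (s : letter),
    gp_eq x (rcons w0 s) -> reduced (rcons w0 s) -> ~ in_Gamma_r (projT1 s).

Definition in_sub_r (b : word) : Prop :=
  exists w : word, gp_eq b w /\ forall s, List.In s w -> in_Gamma_r (projT1 s).

Variable S : forall v, seq (G v).

Definition gen_word (u : word) : Prop :=
  forall s, List.In s u -> List.In (projT2 s) (S (projT1 s)).
Definition gen_weight (u : word) : nat := sumn (map (fun s : letter => wbar (projT1 s)) u).

(* ||gamma|| > t : the infimum of the weights of all expressions of gamma
   as a product of generators exceeds t (weights are natural numbers, so
   the infimum is attained and this is equivalent to every expression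
   having weight > t) *)
Definition norm_gt (gamma : word) (t : R) : Prop :=
  forall u, gen_word u -> gp_eq gamma u -> (t < (gen_weight u)%:R)%R.

Definition dist_gt (g h : word) (t : R) : Prop := norm_gt (wmul (winv g) h) t.

End GraphProduct.

(* Main.v *)
Require Import Defs.
From Stdlib Require Import Relations.
From Stdlib Require List.
From Stdlib Require Import ClassicalEpsilon FunctionalExtensionality Classical.
From mathcomp Require Import all_boot all_order all_algebra.
From mathcomp Require Import reals.
Import Order.TTheory GRing.Theory Num.Theory.
Set Implicit Arguments. Unset Strict Implicit. Unset Printing Implicit Defensive.

Section Grp.
Variable H : group.
Local Notation "x * y" := (gmul x y).
Local Notation "1" := (gone H).
Lemma gcancel (a x y : H) : a * x = a * y -> x = y.
Proof. move=> e. by rewrite -(gmul1 x) -(gmulV a) -gmulA e gmulA gmulV gmul1. Qed.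
Lemma gmulVr (x : H) : x * ginv x = 1.
Proof.
set y := x * ginv x.
have yy : y * y = y by rewrite /y gmulA -(gmulA x (ginv x)) gmulV -gmulA gmul1.
by rewrite -(gmul1 y) -{1}(gmulV y) -gmulA yy gmulV.
Qed.
Lemma gmulr1 (x : H) : x * 1 = x.
Proof. by rewrite -(gmulV x) gmulA gmulVr gmul1. Qed.
Lemma ginv_uniq (x y : H) : x * y = 1 -> y = ginv x.
Proof. move=> e. by rewrite -(gmulr1 (ginv x)) -e gmulA gmulV gmul1. Qed.
Lemma ginv1 : ginv 1 = 1.
Proof. symmetry; apply: ginv_uniq; exact: gmul1. Qed.
Lemma ginvM (x y : H) : ginv (x * y) = ginv y * ginv x.
Proof.
symmetry; apply: ginv_uniq.
by rewrite gmulA -(gmulA x) gmulVr gmulr1 gmulVr.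
Qed.
End Grp.
Section Main.
Variables (V : countType) (adj : rel V) (G : V -> group).
Hypotheses (adj_sym : symmetric adj) (adj_irr : irreflexive adj).

Local Notation L := (letter G).
Local Notation W := (word G).
Local Notation eqw := (gp_eq adj).
Definition vl (l : L) : V := projT1 l.

Lemma eqw_refl (x : W) : eqw x x. Proof. exact: rst_refl. Qed.
Lemma eqw_sym (x y : W) : eqw x y -> eqw y x. Proof. exact: rst_sym. Qed.
Lemma eqw_trans (x y z : W) : eqw x y -> eqw y z -> eqw x z. Proof. exact: rst_trans. Qed.
Lemma eqw_step (x y : W) : gp_step adj x y -> eqw x y. Proof. exact: rst_step. Qed.

Lemma step_catl (p a b : W) : gp_step adj a b -> gp_step adj (p ++ a) (p ++ b).
Proof.
case=> [u u' v|u u' v g h|u u' v v' g h e]; rewrite !catA.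
- exact: gp_del1.
- exact: gp_merge.
- exact: gp_comm.
Qed.
Lemma step_catr (q a b : W) : gp_step adj a b -> gp_step adj (a ++ q) (b ++ q).
Proof.
case=> [u u' v|u u' v g h|u u' v v' g h e]; rewrite -!catA /=.
- exact: gp_del1.
- exact: gp_merge.
- exact: gp_comm.
Qed.
Lemma eqw_catl (p a b : W) : eqw a b -> eqw (p ++ a) (p ++ b).
Proof.
elim=> [x y s|x|x y _ IH|x y z _ IH1 _ IH2].
- by apply: eqw_step; apply: step_catl.
- exact: eqw_refl.
- exact: eqw_sym.
- exact: eqw_trans IH2.
Qed.
Lemma eqw_catr (q a b : W) : eqw a b -> eqw (a ++ q) (b ++ q).
Proof.
elim=> [x y s|x|x y _ IH|x y z _ IH1 _ IH2].
- by apply: eqw_step; apply: step_catr.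
- exact: eqw_refl.
- exact: eqw_sym.
- exact: eqw_trans IH2.
Qed.
Lemma eqw_cat (a b c d : W) : eqw a b -> eqw c d -> eqw (a ++ c) (b ++ d).
Proof. move=> h1 h2; apply: eqw_trans (eqw_catr c h1) (eqw_catl b h2). Qed.

Lemma move_end (k : L) (c : W) : all (fun p => adj (vl p) (vl k)) c ->
  eqw (k :: c) (c ++ [:: k]).
Proof.
elim: c => [|p c IH] /=; first by move=> _; exact: eqw_refl.
case/andP=> hp hc.
apply: eqw_trans (_ : eqw (p :: k :: c) _).
  apply: eqw_step. move: hp; rewrite /vl; case: k {IH hc} => vk gk; case: p => vp gp /= hp.
  have := @gp_comm V adj G [::] c vk vp gk gp; rewrite adj_sym; exact.
exact: (eqw_catl [:: p] (IH hc)).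
Qed.

Definition linv (s : L) : L := existT _ (projT1 s) (ginv (projT2 s)).
Lemma winvE (x : W) : winv x = rev (map linv x). Proof. by []. Qed.
Lemma winv_cat (a b : W) : winv (a ++ b) = winv b ++ winv a.
Proof. by rewrite !winvE map_cat rev_cat. Qed.
Lemma winv_cons (a : L) (b : W) : winv (a :: b) = winv b ++ [:: linv a].
Proof. by rewrite !winvE /= rev_cons cats1. Qed.

Lemma eqw_winv (x y : W) : eqw x y -> eqw (winv x) (winv y).
Proof.
elim=> [x' y' s|x'|x' y' _ IH|x' y' z _ IH1 _ IH2].
- case: s => [u u' v|u u' v g h|u u' v v' g h e];
    rewrite !winv_cat !winv_cons -!catA /= /linv /=.
  + rewrite ginv1; apply: eqw_step; exact: gp_del1.
  + rewrite ginvM; apply: eqw_step; exact: gp_merge.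
  + apply: eqw_step; apply: gp_comm; by rewrite adj_sym.
- exact: eqw_refl.
- exact: eqw_sym.
- exact: eqw_trans IH2.
Qed.

Lemma eqw_winvr (x : W) : eqw (x ++ winv x) [::].
Proof.
elim: x => [|a x IH]; first exact: eqw_refl.
rewrite winv_cons catA /=.
apply: eqw_trans (_ : eqw [:: a; linv a] _).
  exact: (eqw_catl [:: a] (eqw_catr [:: linv a] IH)).
case: a => v g; rewrite /linv /=.
apply: eqw_trans (_ : eqw [:: existT _ v (gone (G v))] _).
  have := @gp_merge V adj G [::] [::] v g (ginv g); rewrite gmulVr /=.
  exact: eqw_step.
have := @gp_del1 V adj G [::] [::] v; exact: eqw_step.
Qed.

Definition State := V -> seq (option L).
Definition entry (l : L) (u : V) : option L := if vl l == u then Some l else None.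
Fixpoint col (u : V) (st : seq L) : seq (option L) :=
  match st with
  | [::] => [::]
  | l :: st' => if ~~ adj (vl l) u then entry l u :: col u st' else col u st'
  end.
Definition pile (st : seq L) : State := fun u => col u st.

Definition trivialb (l : L) : bool :=
  if excluded_middle_informative (projT2 l = gone (G (projT1 l))) then true else false.
Lemma trivialbP l : reflect (projT2 l = gone (G (projT1 l))) (trivialb l).
Proof. rewrite /trivialb; case: excluded_middle_informative => h; by constructor. Qed.

Definition mrg (k l : L) : option L :=
  match k, l with existT vk a, existT v h =>
   match vk =P v with
   | ReflectT e => let a' := eq_rect vk (fun x => gcar (G x)) a v e in
       if excluded_middle_informative (gmul a' h = gone (G v)) then None
       else Some (existT _ v (gmul a' h))
   | ReflectF _ => Some (existT _ v h) end end.

Lemma mrgE v (a h : G v) : mrg (existT _ v a) (existT _ v h) =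
  if excluded_middle_informative (gmul a h = gone (G v)) then None
  else Some (existT _ v (gmul a h)).
Proof.
rewrite /mrg. destruct (v =P v) as [e|e]; last by case: e.
by rewrite (eq_irrelevance e erefl).
Qed.

Lemma mrg_vl k l kl : mrg k l = Some kl -> vl kl = vl l.
Proof.
case: k l => vk a [v h] /=. destruct (vk =P v) as [e|e].
  by case: excluded_middle_informative => // _ [<-].
by case=> <-.
Qed.

Inductive mode := MId | MRep of L | MPop | MPush.
Definition modeof (s : State) (l : L) : mode :=
  if trivialb l then MId else
  match s (vl l) with
  | Some k :: _ => match mrg k l with Some kl => MRep kl | None => MPop end
  | _ => MPush
  end.
Definition opm (m : mode) (l : L) (u : V) (c : seq (option L)) :=
  match m with
  | MId => c
  | MRep kl => if u == vl l then Some kl :: behead c else c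
  | MPop => behead c
  | MPush => entry l u :: c
  end.
Definition act (s : State) (l : L) : State :=
  fun u => if ~~ adj (vl l) u then opm (modeof s l) l u (s u) else s u.
Definition Phi (w : W) : State := foldl act (fun _ => [::]) w.

Lemma col_cat u a b : col u (a ++ b) = col u a ++ col u b.
Proof. elim: a => //= p a ->; by case: ifP. Qed.

Lemma col_adj v b : all (fun p => adj (vl p) v) b -> col v b = [::].
Proof. elim: b => //= p b IH /andP [-> /IH]; done. Qed.

Lemma P1 v k a b : all (fun p => adj (vl p) v) b -> vl k = v ->
  col v (b ++ k :: a) = Some k :: col v (b ++ a).
Proof.
move=> hb hk; rewrite !col_cat (col_adj hb) /= hk adj_irr /= /entry hk eqxx //.
Qed.

Lemma P2 v u k a b : all (fun p => adj (vl p) v) b -> vl k = v -> ~~ adj v u -> u != v ->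
  col u (b ++ k :: a) = None :: col u (b ++ a).
Proof.
move=> hb hk hvu huv; elim: b hb => [|p b IH] /=.
  by rewrite hk hvu /entry hk eq_sym (negbTE huv).
case/andP=> hp hb; rewrite (IH hb); case: ifP => // hpu.
have -> : entry p u = None.
  rewrite /entry; case: eqP => // e; move: hvu; by rewrite -e adj_sym hp.
done.
Qed.

Lemma P3 v u k a b : vl k = v -> adj v u -> col u (b ++ k :: a) = col u (b ++ a).
Proof. move=> hk hvu; by rewrite !col_cat /= hk hvu. Qed.

Lemma pile_front k a b : all (fun p => adj (vl p) (vl k)) b ->
  pile (k :: b ++ a) = pile (b ++ k :: a).
Proof.
move=> hb; apply: functional_extensionality => u; rewrite /pile /=.
case: (boolP (adj (vl k) u)) => h /=.
  by rewrite (@P3 (vl k) u k a b erefl h).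
case: (eqVneq u (vl k)) => [->|huv].
  by rewrite (@P1 (vl k) k a b hb erefl) /entry eqxx.
by rewrite (@P2 (vl k) u k a b hb erefl h huv) /entry eq_sym (negbTE huv).
Qed.

Lemma pile_inv st v k rest : pile st v = Some k :: rest ->
  exists b a, [/\ st = b ++ k :: a, all (fun p => adj (vl p) v) b & vl k = v].
Proof.
rewrite /pile; elim: st rest => //= p st IH rest.
case: ifP => h.
  rewrite /entry; case: eqP => // e [ek _]; subst k.
  by exists [::], st.
case/IH=> b [a [-> hb hk]]; exists (p :: b), a; split => //=.
by rewrite hb andbT; move/negbFE: h.
Qed.

Lemma act_id s l : trivialb l -> act s l = s.
Proof.
move=> h; apply: functional_extensionality => u; rewrite /act /modeof h.
by case: ifP.
Qed.

Lemma act_pushE s l : modeof s l = MPush -> act s l = fun u =>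
  if ~~ adj (vl l) u then entry l u :: s u else s u.
Proof. by move=> h; rewrite /act h. Qed.

Lemma act_push st l : modeof (pile st) l = MPush -> act (pile st) l = pile (l :: st).
Proof. by move/act_pushE ->. Qed.

Lemma act_rep st l b k a kl : st = b ++ k :: a -> all (fun p => adj (vl p) (vl l)) b ->
  vl k = vl l -> vl kl = vl l -> modeof (pile st) l = MRep kl ->
  act (pile st) l = pile (b ++ kl :: a).
Proof.
move=> -> hb hk hkl hm; apply: functional_extensionality => u.
rewrite /act hm /pile /=; case: (boolP (adj (vl l) u)) => h /=.
  by rewrite (@P3 _ u k a b hk h) (@P3 _ u kl a b hkl h).
case: (eqVneq u (vl l)) => [->|huv].
  by rewrite ?eqxx (@P1 _ k a b hb hk) (@P1 _ kl a b hb hkl).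
by rewrite ?(negbTE huv) (@P2 _ u k a b hb hk h huv) (@P2 _ u kl a b hb hkl h huv).
Qed.

Lemma act_pop st l b k a : st = b ++ k :: a -> all (fun p => adj (vl p) (vl l)) b ->
  vl k = vl l -> modeof (pile st) l = MPop ->
  act (pile st) l = pile (b ++ a).
Proof.
move=> -> hb hk hm; apply: functional_extensionality => u.
rewrite /act hm /pile /=; case: (boolP (adj (vl l) u)) => h /=.
  by rewrite (@P3 _ u k a b hk h).
case: (eqVneq u (vl l)) => [->|huv].
  by rewrite (@P1 _ k a b hb hk).
by rewrite (@P2 _ u k a b hb hk h huv).
Qed.

Fixpoint th (v : V) (vs : seq V) : bool :=
  match vs with
  | [::] => false
  | p :: vs' => if ~~ adj p v then p == v else th v vs'
  end.
Fixpoint goodV (vs : seq V) : bool :=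
  match vs with [::] => true | p :: vs' => ~~ th p vs' && goodV vs' end.
Definition Good (st : seq L) := goodV (map vl st) && all (fun l => ~~ trivialb l) st.
Definition tilehead (v : V) (s : State) : bool :=
  if s v is Some _ :: _ then true else false.

Lemma th_pile v st : tilehead v (pile st) = th v (map vl st).
Proof.
rewrite /tilehead /pile; elim: st => //= p st <-.
case: ifP => // _; rewrite /entry; by case: eqP.
Qed.

Lemma th_skip p v bs as_ : adj v p -> th p (bs ++ v :: as_) = th p (bs ++ as_).
Proof. move=> h; elim: bs => [|q bs IH] /=; first by rewrite h. by rewrite IH. Qed.

Lemma goodV_del v bs as_ : all (fun p => adj p v) bs -> goodV (bs ++ v :: as_) -> goodV (bs ++ as_).
Proof.
elim: bs => [|p bs IH] /=; first by move=> _ /andP [].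
case/andP=> hp hb /andP [h1 h2]; rewrite IH // andbT.
by rewrite -(@th_skip p v bs as_) // adj_sym.
Qed.

Lemma goodV_cat xs ys : goodV (xs ++ ys) -> goodV ys.
Proof. elim: xs => //= p xs IH /andP [_]; exact: IH. Qed.

Lemma Good_pop b k a : Good (b ++ k :: a) -> all (fun p => adj (vl p) (vl k)) b -> Good (b ++ a).
Proof.
rewrite /Good !map_cat /= !all_cat /= => /andP [g1 /and3P [n1 _ n2]] hb.
rewrite n1 n2 !andbT; apply: (goodV_del (v := vl k)) => //.
by rewrite all_map.
Qed.

Lemma Good_rep b k a kl : Good (b ++ k :: a) -> vl kl = vl k -> ~~ trivialb kl ->
  Good (b ++ kl :: a).
Proof.
rewrite /Good !map_cat /= !all_cat /= => /andP [g1 /and3P [n1 _ n2]] hk hn.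
by rewrite hk g1 n1 n2 hn.
Qed.

Lemma Good_push st l : Good st -> ~~ tilehead (vl l) (pile st) -> ~~ trivialb l ->
  Good (l :: st).
Proof. rewrite /Good /= th_pile => /andP [-> ->] -> ->. done. Qed.

Lemma Good_below b k a : Good (b ++ k :: a) -> ~~ th (vl k) (map vl a).
Proof. rewrite /Good map_cat => /andP [/goodV_cat /= /andP [] ]. done. Qed.

Lemma rev_split (b : seq L) k a : rev (b ++ k :: a) = rev a ++ k :: rev b.
Proof. by rewrite rev_cat rev_cons -cats1 -catA. Qed.

Lemma merge_end v (a0 h : G v) (x c : W) : all (fun p => adj (vl p) v) c ->
  eqw (x ++ existT _ v a0 :: c ++ [:: existT _ v h]) (x ++ c ++ [:: existT _ v (gmul a0 h)]).
Proof.
move=> hc; apply: eqw_catl.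
apply: eqw_trans (_ : eqw ((c ++ [:: existT _ v a0]) ++ [:: existT _ v h]) _).
  have := eqw_catr [:: existT _ v h] (@move_end (existT _ v a0) c hc); by rewrite /=.
rewrite -catA /=; apply: eqw_step; exact: gp_merge.
Qed.

Lemma act_step st l : Good st -> exists st', [/\ Good st', act (pile st) l = pile st',
  eqw (rev st ++ [:: l]) (rev st') & (size st' <= (size st).+1)%N].
Proof.
move=> gst; case: (boolP (trivialb l)) => tl.
  exists st; rewrite act_id //; split => //.
    move/trivialbP: tl; case: l => v g /= ->.
    have := @gp_del1 V adj G (rev st) [::] v; rewrite cats0; exact: eqw_step.
have hm : modeof (pile st) l = match pile st (vl l) with
  | Some k :: _ => match mrg k l with Some kl => MRep kl | None => MPop end
  | _ => MPush end by rewrite /modeof (negbTE tl).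
have push : ~~ tilehead (vl l) (pile st) -> modeof (pile st) l = MPush ->
    exists st', [/\ Good st', act (pile st) l = pile st',
    eqw (rev st ++ [:: l]) (rev st') & (size st' <= (size st).+1)%N].
  move=> nt hp; exists (l :: st); split => //.
  - exact: Good_push.
  - exact: act_push.
  - by rewrite rev_cons -cats1; exact: eqw_refl.
move: hm; case E: (pile st (vl l)) => [|[k|] rest] hm.
- by apply: push => //; rewrite /tilehead E.
- have [b [a [est hb hk]]] := pile_inv E.
  clear push; move: hm; case: l tl E hb hk => v h tl E hb hk.
  case: k E hk est => vk a0 E hk est; simpl in hk; subst vk.
  rewrite mrgE; case: excluded_middle_informative => hp hm.
  + exists (b ++ a); split.
    * by apply: (@Good_pop b (existT _ v a0) a); rewrite -?est.
    * exact: (@act_pop st _ b (existT _ v a0) a).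
    * have hc : all (fun p => adj (vl p) v) (rev b) by rewrite all_rev.
      rewrite est rev_split -catA /=.
      apply: eqw_trans (@merge_end v a0 h (rev a) (rev b) hc) _.
      rewrite hp; have := @gp_del1 V adj G (rev a ++ rev b) [::] v.
      rewrite cats0 -catA rev_cat; exact: eqw_step.
    * by rewrite est !size_cat /= addnS leqW // leqW.
  + exists (b ++ existT _ v (gmul a0 h) :: a); split.
    * apply: (@Good_rep b (existT _ v a0)); rewrite -?est //.
      by apply/trivialbP.
    * exact: (@act_rep st _ b (existT _ v a0) a).
    * have hc : all (fun p => adj (vl p) v) (rev b) by rewrite all_rev.
      rewrite est !rev_split -catA /=.
      apply: eqw_trans (@merge_end v a0 h (rev a) (rev b) hc) _.
      apply: eqw_catl; apply: eqw_sym; exact: move_end.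
    * by rewrite est !size_cat.
- by apply: push => //; rewrite /tilehead E.
Qed.

Lemma Phi_spec w : exists st, [/\ Good st, Phi w = pile st, eqw w (rev st) &
  (size st <= size w)%N].
Proof.
elim/last_ind: w => [|w l [st [g e q s]]].
  exists [::]; split => //; exact: eqw_refl.
have [st' [g' e' q' s']] := act_step l g.
exists st'; split => //.
- by rewrite /Phi foldl_rcons -/(Phi w) e.
- rewrite -cats1; apply: eqw_trans q'; exact: eqw_catr.
- by rewrite size_rcons (leq_trans s').
Qed.

Lemma modeof_ext s1 s2 l : s1 (vl l) = s2 (vl l) -> modeof s1 l = modeof s2 l.
Proof. by rewrite /modeof => ->. Qed.

Lemma modeof_push s l : ~~ trivialb l -> ~~ tilehead (vl l) s -> modeof s l = MPush.
Proof.
rewrite /modeof /tilehead => /negbTE -> ; case: (s (vl l)) => [|[k|] r] //.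
Qed.

Lemma modeof_some s v (a0 h : G v) rest : s v = Some (existT _ v a0) :: rest ->
  ~~ trivialb (existT _ v h) ->
  modeof s (existT _ v h) = if excluded_middle_informative (gmul a0 h = gone (G v))
    then MPop else MRep (existT _ v (gmul a0 h)).
Proof.
move=> E /negbTE t; rewrite /modeof t /= E mrgE.
by case: excluded_middle_informative.
Qed.

Lemma mode_pop_head st l : modeof (pile st) l = MPop ->
  forall u, ~~ adj (vl l) u -> u != vl l -> pile st u = None :: behead (pile st u).
Proof.
rewrite /modeof; case: (trivialb l) => //.
case E: (pile st (vl l)) => [|[k|] r] // _ u h1 h2.
have [b [a [est hb hk]]] := pile_inv E.
by rewrite /pile est (@P2 _ u k a b hb hk h1 h2).
Qed.

Definition fop (m : mode) (c : seq (option L)) :=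
  match m with MPop => behead c | MPush => None :: c | _ => c end.

Lemma opm_other m l u c : u != vl l -> opm m l u c = fop m c.
Proof.
move=> h; case: m => //= [kl|]; first by rewrite (negbTE h).
by rewrite /entry eq_sym (negbTE h).
Qed.

Lemma fop_comm m1 m2 c : (m1 = MPop -> c = None :: behead c) ->
  (m2 = MPop -> c = None :: behead c) -> fop m1 (fop m2 c) = fop m2 (fop m1 c).
Proof.
move=> H1 H2; case: m1 H1; case: m2 H2 => //=.
all: try (by move=> _ H; rewrite {2}(H erefl)).
all: try (by move=> H _; rewrite {2}(H erefl)).
all: try (by move=> _ H; exact: H).
all: try (by move=> H _; exact: H).
Qed.

Lemma act_comm st l1 l2 : adj (vl l1) (vl l2) ->
  act (act (pile st) l1) l2 = act (act (pile st) l2) l1.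
Proof.
move=> h12.
have e1 : modeof (act (pile st) l2) l1 = modeof (pile st) l1.
  apply: modeof_ext; by rewrite /act adj_sym h12.
have e2 : modeof (act (pile st) l1) l2 = modeof (pile st) l2.
  apply: modeof_ext; by rewrite /act h12.
apply: functional_extensionality => u; rewrite /act e1 e2.
case: (boolP (adj (vl l1) u)) => h1; case: (boolP (adj (vl l2) u)) => h2 //=.
have n1 : u != vl l1 by apply/eqP => e; move: h2; rewrite e adj_sym h12.
have n2 : u != vl l2 by apply/eqP => e; move: h1; rewrite e h12.
rewrite !opm_other //; apply: fop_comm.
- move=> hm; exact: (mode_pop_head hm).
- move=> hm; exact: (mode_pop_head hm).
Qed.

Lemma Good_nontriv st k : Good st -> List.In k st -> ~~ trivialb k.
Proof.
case/andP=> _; elim: st => //= p st IH /andP [hp hs] [<-|]; first done.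
exact: IH.
Qed.

Lemma act_merge st v (g h : G v) : Good st ->
  act (act (pile st) (existT _ v g)) (existT _ v h) = act (pile st) (existT _ v (gmul g h)).
Proof.
move=> gs.
case: (trivialbP (existT _ v g)) => /= tg.
  have -> : act (pile st) (existT _ v g) = pile st by apply: act_id; apply/trivialbP.
  by rewrite tg gmul1.
case: (trivialbP (existT _ v h)) => /= th.
  have -> : act (act (pile st) (existT _ v g)) (existT _ v h) = act (pile st) (existT _ v g).
    by apply: act_id; apply/trivialbP.
  by rewrite th gmulr1.
have ng : ~~ trivialb (existT _ v g) by apply/trivialbP.
have nh : ~~ trivialb (existT _ v h) by apply/trivialbP.
have nil_case : ~~ tilehead v (pile st) -> act (act (pile st) (existT _ v g)) (existT _ v h) =
    act (pile st) (existT _ v (gmul g h)).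
  move=> np.
  rewrite (act_push (modeof_push ng np)).
  have E1 : pile (existT _ v g :: st) v = Some (existT _ v g) :: pile st v.
    by rewrite /pile /= adj_irr /entry /= eqxx.
  have hm := modeof_some E1 nh.
  case: excluded_middle_informative hm => hp hm.
    rewrite (@act_pop (existT _ v g :: st) (existT _ v h) [::] (existT _ v g) st erefl erefl erefl hm).
    by rewrite act_id //; apply/trivialbP.
  rewrite (@act_rep (existT _ v g :: st) (existT _ v h) [::] (existT _ v g) st
    (existT _ v (gmul g h)) erefl erefl erefl erefl hm) /=.
  rewrite act_push //; apply: modeof_push => //; by apply/trivialbP.
case E: (pile st v) => [|[k|] rest].
- by apply: nil_case; rewrite /tilehead E.
- clear nil_case.
  have [b [a [est hb hk]]] := pile_inv E.
  move: E est hk; case: k => vk a0 E est hk; simpl in hk; subst vk.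
  have na0 : a0 <> gone (G v).
    move=> e; have : List.In (existT _ v a0) st.
      by rewrite est; apply: List.in_or_app; right; left.
    by move/(Good_nontriv gs)/trivialbP.
  have hm1 := modeof_some E ng.
  case: excluded_middle_informative hm1 => hag hm1; simpl in hm1.
  + rewrite (@act_pop st (existT _ v g) b (existT _ v a0) a est hb erefl hm1).
    have np : ~~ tilehead v (pile (b ++ a)).
      rewrite /tilehead /pile col_cat (col_adj hb) /= -/(tilehead v (pile a)).
      rewrite th_pile; apply: (@Good_below b (existT _ v a0) a); by rewrite -est.
    rewrite (act_push (modeof_push nh np)) pile_front //.
    case: (trivialbP (existT _ v (gmul g h))) => /= hgh.
      rewrite act_id; last by apply/trivialbP.
      have -> : h = a0.
        by rewrite -(gmulr1 a0) -hgh gmulA hag gmul1.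
      by rewrite est.
    have hm2 := modeof_some E (introN (trivialbP (existT _ v (gmul g h))) hgh).
    case: excluded_middle_informative hm2 => hp hm2; simpl in hm2.
      by exfalso; apply: th; rewrite -hp gmulA hag gmul1.
    rewrite (@act_rep st (existT _ v (gmul g h)) b (existT _ v a0) a (existT _ v (gmul a0 (gmul g h))) est hb erefl erefl hm2).
    by rewrite gmulA hag gmul1.
  + rewrite (@act_rep st (existT _ v g) b (existT _ v a0) a (existT _ v (gmul a0 g)) est hb erefl erefl hm1).
    have E1 : pile (b ++ existT _ v (gmul a0 g) :: a) v =
        Some (existT _ v (gmul a0 g)) :: col v (b ++ a).
      by rewrite /pile (@P1 v (existT _ v (gmul a0 g)) a b hb erefl).
    have hm3 := modeof_some E1 nh.
    case: (trivialbP (existT _ v (gmul g h))) => /= hgh.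
      rewrite [in RHS]act_id; last by apply/trivialbP.
      case: excluded_middle_informative hm3 => hp hm3; simpl in hm3.
        by exfalso; apply: na0; rewrite -hp -gmulA hgh gmulr1.
      rewrite (@act_rep (b ++ existT _ v (gmul a0 g) :: a) (existT _ v h) b (existT _ v (gmul a0 g)) a (existT _ v (gmul (gmul a0 g) h)) erefl hb erefl erefl hm3).
      by rewrite -gmulA hgh gmulr1 est.
    have hm2 := modeof_some E (introN (trivialbP (existT _ v (gmul g h))) hgh).
    case: excluded_middle_informative hm3 => hp hm3; simpl in hm3;
    case: excluded_middle_informative hm2 => hq hm2; simpl in hm2.
    * rewrite (@act_pop (b ++ existT _ v (gmul a0 g) :: a) (existT _ v h) b (existT _ v (gmul a0 g)) a erefl hb erefl hm3).
      by rewrite (@act_pop st (existT _ v (gmul g h)) b (existT _ v a0) a est hb erefl hm2).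
    * by exfalso; apply: hq; rewrite gmulA.
    * by exfalso; apply: hp; rewrite -gmulA.
    * rewrite (@act_rep (b ++ existT _ v (gmul a0 g) :: a) (existT _ v h) b (existT _ v (gmul a0 g)) a (existT _ v (gmul (gmul a0 g) h)) erefl hb erefl erefl hm3).
      rewrite (@act_rep st (existT _ v (gmul g h)) b (existT _ v a0) a (existT _ v (gmul a0 (gmul g h))) est hb erefl erefl hm2).
      by rewrite gmulA.
- by apply: nil_case; rewrite /tilehead E.
Qed.

Lemma Phi_cat u s : Phi (u ++ s) = foldl act (Phi u) s.
Proof. by rewrite /Phi foldl_cat. Qed.

Lemma Phi_step w w' : gp_step adj w w' -> Phi w = Phi w'.
Proof.
case=> [u u' v|u u' v a h|u u' v v' a h hadj]; rewrite !Phi_cat /=.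
- by rewrite act_id //; apply/trivialbP.
- have [st [gs e _ _]] := Phi_spec u; by rewrite e act_merge.
- have [st [gs e _ _]] := Phi_spec u; by rewrite e act_comm.
Qed.

Lemma Phi_eqw w w' : eqw w w' -> Phi w = Phi w'.
Proof. elim=> [x y s|x|x y _ IH|x y z _ IH1 _ IH2]; [exact: Phi_step|done|by rewrite IH|by rewrite IH1 IH2]. Qed.

Lemma pile_inj n st1 st2 : (size st1 <= n)%N -> pile st1 = pile st2 ->
  eqw (rev st1) (rev st2) /\ size st1 = size st2.
Proof.
elim: n st1 st2 => [|n IH] [|k a1] st2 //=.
- case: st2 => [|l st2] //= _ e; first by split => //; exact: eqw_refl.
  have := f_equal (fun s => s (vl l)) e; rewrite /pile /= adj_irr /= /entry eqxx //.
- case: st2 => [|l st2] //= _ e; first by split => //; exact: eqw_refl.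
  have := f_equal (fun s => s (vl l)) e; rewrite /pile /= adj_irr /= /entry eqxx //.
- move=> hs e.
  have E : pile st2 (vl k) = Some k :: col (vl k) a1.
    by rewrite -e /pile /= adj_irr /entry eqxx.
  have [b [a [est hb hk]]] := pile_inv E.
  have e1 : pile a1 = pile (b ++ a).
    apply: functional_extensionality => u.
    have := f_equal (fun s => s u) e; rewrite /pile /= est.
    case: (boolP (adj (vl k) u)) => h /=.
      by rewrite (@P3 _ u k a b hk h).
    case: (eqVneq u (vl k)) => [->|huv].
      by rewrite (@P1 _ k a b hb hk) /entry eqxx => -[].
    by rewrite (@P2 _ u k a b hb hk h huv) /entry eq_sym (negbTE huv) => -[].
  have [q s] := IH _ _ hs e1.
  split; last by rewrite est size_cat /= s size_cat addnS.
  rewrite est rev_split rev_cons -cats1.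
  apply: eqw_trans (eqw_catr [:: k] q) _; rewrite rev_cat -catA.
  apply: eqw_catl; apply: eqw_sym; apply: move_end; by rewrite all_rev.
Qed.

Lemma Phi_complete w1 w2 : Phi w1 = Phi w2 -> eqw w1 w2.
Proof.
have [st1 [_ e1 q1 _]] := Phi_spec w1; have [st2 [_ e2 q2 _]] := Phi_spec w2.
rewrite e1 e2 => e; have [q _] := pile_inj (leqnn _) e.
apply: eqw_trans q1 _; apply: eqw_trans q _; exact: eqw_sym.
Qed.

Lemma in_catE (T : Type) (x : T) (a b : seq T) : List.In x (a ++ b) -> List.In x a \/ List.In x b.
Proof. elim: a => [|y a IH] /=; first by right. case=> [->|/IH [|]]; tauto. Qed.

Lemma split2 (b a d st : seq L) k : b ++ k :: a = d ++ st ->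
  (exists d2, d = b ++ k :: d2 /\ a = d2 ++ st) \/
  (exists b2, b = d ++ b2 /\ st = b2 ++ k :: a).
Proof.
elim: b d => [|x b IH] [|y d] /=.
- by move=> <-; right; exists [::].
- by case=> <- ->; left; exists d.
- by move=> <-; right; exists (x :: b).
- case=> <- /IH [[d2 [-> ->]]|[b2 [-> ->]]]; [left; by exists d2|right; by exists b2].
Qed.

Lemma act_A (P : V -> Prop) st : (forall v, P v -> ~~ tilehead v (pile st)) ->
  forall c d, (forall l, List.In l c -> P (vl l)) -> (forall l, List.In l d -> P (vl l)) ->
  exists d', (forall l, List.In l d' -> P (vl l)) /\
             foldl act (pile (d ++ st)) c = pile (d' ++ st).
Proof.
move=> nt; elim=> [|l c IH] d hc hd /=; first by exists d.
have hl : P (vl l) by apply: hc; left.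
suff [d1 [hd1 ->]] : exists d1, (forall l, List.In l d1 -> P (vl l)) /\
    act (pile (d ++ st)) l = pile (d1 ++ st).
  by apply: IH => // l' hl'; apply: hc; right.
case: (boolP (trivialb l)) => tl.
  by exists d; rewrite act_id.
have hm : modeof (pile (d ++ st)) l = match pile (d ++ st) (vl l) with
  | Some k :: _ => match mrg k l with Some kl => MRep kl | None => MPop end
  | _ => MPush end by rewrite /modeof (negbTE tl).
have push : modeof (pile (d ++ st)) l = MPush -> exists d1,
    (forall l, List.In l d1 -> P (vl l)) /\ act (pile (d ++ st)) l = pile (d1 ++ st).
  move=> hp; exists (l :: d); split; last exact: act_push.
  by move=> l' [<-|]; [|apply: hd].
move: hm; case E: (pile (d ++ st) (vl l)) => [|[k|] rest] hm; try exact: push.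
have [b [a [est hb hk]]] := pile_inv E.
case: (split2 (esym est)) => [[d2 [ed ea]]|[b2 [eb es]]]; last first.
  exfalso; move: (nt _ hl); rewrite /tilehead /pile es.
  rewrite eb all_cat in hb; case/andP: hb => _ hb2.
  by rewrite (@P1 _ k a b2 hb2 hk).
have inb : forall l', List.In l' b -> P (vl l').
  move=> l' h'; apply: hd; rewrite ed; apply: List.in_or_app; by left.
have ind2 : forall l', List.In l' d2 -> P (vl l').
  move=> l' h'; apply: hd; rewrite ed; apply: List.in_or_app; by right; right.
move: hm; case M: (mrg k l) => [kl|] hm.
- exists (b ++ kl :: d2); split.
    move=> l' H; case: (in_catE H) => [|[<-|]]; [exact: inb| |exact: ind2].
    by rewrite (mrg_vl M).
  by rewrite (act_rep est hb hk (mrg_vl M) hm) ea -catA.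
- exists (b ++ d2); split.
    by move=> l' H; case: (in_catE H); [exact: inb|exact: ind2].
  by rewrite (act_pop est hb hk hm) ea catA.
Qed.

Lemma app_cat (T : Type) (a b : seq T) : (a ++ b)%list = a ++ b.
Proof. by elim: a => //= x a ->. Qed.

Lemma nsa (w : W) : ~ syllable_adj w -> exists u u' v (g h : G v),
  w = u ++ existT _ v g :: existT _ v h :: u'.
Proof.
elim: w => [|s w IH] //=.
case: w IH => [|s' w''] // IH.
move=> /(not_and_or _ _) [h|h].
  move/NNPP: h; case: s => vs gs; case: s' {IH} => vs' gs' /= e; subst vs'.
  by exists [::], w'', vs, gs, gs'.
case: (IH h) => u [u' [v [g [h' e]]]].
by exists (s :: u), u', v, g, h'; rewrite e.
Qed.

Lemma minimal_syll (w : W) : (forall w', eqw w w' -> (size w <= size w')%N) ->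
  in_syllables w.
Proof.
move=> hm; split.
  move=> s Hs; case: (List.in_split _ _ Hs) => u [u' ew]; rewrite app_cat in ew.
  case: s ew {Hs} => v g /= ew eg; subst g.
  have := hm (u ++ u'); rewrite ew; move/(_ (eqw_step (gp_del1 _ _ _ _))).
  by rewrite !size_cat /= addnS ltnn.
apply: NNPP => /nsa [u [u' [v [g [h e]]]]].
have := hm (u ++ existT _ v (gmul g h) :: u'); rewrite e.
move/(_ (eqw_step (gp_merge _ _ _ _ _))).
by rewrite !size_cat /= !addnS ltnn.
Qed.

Lemma perm_notile (R : realType) (wbar : V -> nat) (r : R) (x : W) :
  permissible adj wbar r x -> forall v, in_Gamma_r wbar r v -> ~~ tilehead v (Phi x).
Proof.
move=> px v hv; apply/negP => tv.
have [st [gs e q s]] := Phi_spec x.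
move: tv; rewrite e /tilehead; case E: (pile st v) => [|[k|] rest] // _.
have [b [a [est hb hk]]] := pile_inv E.
apply: (px (rev a ++ rev b) k); last by rewrite -/(vl k) hk.
- apply: eqw_trans q _; rewrite est rev_split -cats1 -catA.
  apply: eqw_catl; apply: move_end; by rewrite all_rev hk.
- have hmin : forall w', eqw (rcons (rev a ++ rev b) k) w' ->
      (size (rcons (rev a ++ rev b) k) <= size w')%N.
    move=> w' hw.
    have [st' [_ e' _ s']] := Phi_spec w'.
    have ex : eqw x w'.
      apply: eqw_trans hw; apply: eqw_trans q _; rewrite est rev_split -cats1 -catA.
      apply: eqw_catl; apply: move_end; by rewrite all_rev hk.
    have := Phi_eqw ex; rewrite e e' => ep.
    have [_ ss] := pile_inj (leqnn _) ep.
    apply: leq_trans s'; rewrite -ss est size_rcons !size_cat !size_rev /= addnS.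
    by rewrite addnC.
  split => //; exact: minimal_syll.
Qed.

Lemma notile_eq st : forall d, (forall v, List.In v (map vl d) -> ~~ tilehead v (pile (d ++ st))) ->
  d = [::].
Proof.
case=> // l d h; exfalso.
move: (h (vl l) (or_introl erefl)); by rewrite /tilehead /pile /= adj_irr /entry eqxx.
Qed.

End Main.

Lemma in_catE' (T : Type) (x : T) (a b : seq T) : List.In x (a ++ b) -> List.In x a \/ List.In x b.
Proof. elim: a => [|y a IH] /=; first by right. case=> [->|/IH [|]]; tauto. Qed.

Lemma in_rev' (T : Type) (x : T) (s : seq T) : List.In x (rev s) -> List.In x s.
Proof.
elim: s => [|y s IH] //=; rewrite rev_cons -cats1 => H.
case: (in_catE' H) => [/IH|[->|]]; tauto.
Qed.

Lemma in_map' (T U : Type) (f : T -> U) (x : U) (s : seq T) :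
  List.In x (map f s) -> exists y, x = f y /\ List.In y s.
Proof.
elim: s => [|y s IH] //= [<-|/IH [z [-> hz]]]; [by exists y; split; [|left]|].
by exists z; split; [|right].
Qed.

Lemma weight_le (V : countType) (G : V -> group) (wbar : V -> nat) (u : word G) s :
  List.In s u -> (wbar (projT1 s) <= gen_weight wbar u)%N.
Proof.
rewrite /gen_weight; elim: u => [|y u IH] //= [<-|/IH h]; first exact: leq_addr.
exact: leq_trans h (leq_addl _ _).
Qed.

Unset Implicit Arguments.
Local Open Scope ring_scope.

Theorem lemma3p1
  (V : countType) (adj : rel V)
  (adj_sym : symmetric adj) (adj_irr : irreflexive adj)
  (G : V -> group) (S : forall v, seq (G v))
  (S_inv : forall v (s : G v), List.In s (S v) -> List.In (ginv s) (S v))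
  (S_1 : forall v, ~ List.In (gone (G v)) (S v))
  (S_gen : forall v (g : G v), exists l : seq (G v),
       (forall s, List.In s l -> List.In s (S v)) /\
       g = foldr (@gmul (G v)) (gone (G v)) l)
  (wbar : V -> nat) (wbar_inj : injective wbar) (wbar_pos : forall v, (0 < wbar v)%N)
  (wbar_onto : (~ exists s : seq V, forall v, v \in s) ->
       forall n : nat, (0 < n)%N -> exists v, wbar v = n)
  (R : realType) (r : R) (r_pos : 0 < r) :
  (forall g : word G, exists x b : word G,
      permissible adj wbar r x /\ in_sub_r adj wbar r b /\ gp_eq adj g (wmul x b)) /\
  (forall x x' b b' : word G,
      permissible adj wbar r x -> permissible adj wbar r x' -> ~ gp_eq adj x x' ->
      in_sub_r adj wbar r b -> in_sub_r adj wbar r b' ->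
      dist_gt adj wbar S (wmul x b) (wmul x' b') r).
Proof.
split.
- move=> g.
  have step : forall x b, ~ permissible adj wbar r x -> in_sub_r adj wbar r b ->
      gp_eq adj g (x ++ b) -> exists x' b', (size x' < size x)%N /\
      in_sub_r adj wbar r b' /\ gp_eq adj g (x' ++ b').
    move=> x b px [bw [hb hbw]] hg.
    have [w0 [s [h1 [h2 h3]]]] : exists w0 s, gp_eq adj x (rcons w0 s) /\
        reduced adj (rcons w0 s) /\ in_Gamma_r wbar r (projT1 s).
      apply: NNPP => H; apply: px => w0 s h1 h2 h3; apply: H; by exists w0, s.
    have hsz := h2.2 _ (eqw_sym h1); rewrite size_rcons in hsz.
    exists w0, (s :: b); split => //; split.
      exists (s :: bw); split; first exact: (eqw_catl [:: s] hb).
      by move=> s' [<-|/hbw].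
    apply: eqw_trans hg _; rewrite -cat_rcons; exact: eqw_catr.
  suff: forall n x b, (size x <= n)%N -> in_sub_r adj wbar r b -> gp_eq adj g (x ++ b) ->
      exists x b, permissible adj wbar r x /\ in_sub_r adj wbar r b /\ gp_eq adj g (wmul x b).
    apply; first exact: leqnn.
      by exists [::]; split; [exact: eqw_refl|].
    rewrite cats0; exact: eqw_refl.
  elim=> [|n IH] x b hs hb hg.
  + case: (classic (permissible adj wbar r x)) => px; first by exists x, b.
    have [x' [b' [h1 _]]] := step x b px hb hg.
    by move: hs; rewrite leqn0 => /eqP e; rewrite e in h1.
  + case: (classic (permissible adj wbar r x)) => px; first by exists x, b.
    have [x' [b' [h1 [h2 h3]]]] := step x b px hb hg.
    apply: (IH x' b') => //; rewrite -ltnS; exact: leq_trans hs.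
- move=> x x' b b' px px' nx [bw [hb hbw]] [bw' [hb' hbw']] u _ hu.
  rewrite ltNge; apply/negP => hw.
  have uA : forall s, List.In s u -> in_Gamma_r wbar r (projT1 s).
    move=> s hs; rewrite /in_Gamma_r; apply: le_trans hw; rewrite ler_nat.
    exact: weight_le.
  set c := bw ++ u ++ winv bw'.
  have cA : forall s, List.In s c -> in_Gamma_r wbar r (vl s).
    move=> s H; case: (in_catE' H) => [/hbw //|H2].
    case: (in_catE' H2) => [/uA //|].
    rewrite winvE => H3; case: (in_map' (in_rev' H3)) => y [-> hy]; exact: hbw' hy.
  have hx' : gp_eq adj (x ++ c) x'.
    apply: eqw_trans (_ : gp_eq adj (x ++ (b ++ u ++ winv b')) _).
      apply: eqw_catl; apply: eqw_cat; first exact: eqw_sym.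
      apply: eqw_catl; apply: (eqw_winv adj_sym); exact: eqw_sym.
    rewrite catA; rewrite /wmul in hu.
    apply: eqw_trans (eqw_catl (x ++ b) (eqw_catr (winv b') (eqw_sym hu))) _.
    have -> : (x ++ b) ++ (winv (x ++ b) ++ (x' ++ b')) ++ winv b' =
      ((x ++ b) ++ winv (x ++ b)) ++ (x' ++ (b' ++ winv b')) by rewrite !catA.
    have := eqw_cat (eqw_winvr adj (x ++ b)) (eqw_catl x' (eqw_winvr adj b')).
    by rewrite /= cats0.
  have e : Phi adj x' = foldl (@act V adj G) (Phi adj x) c.
    by rewrite -(Phi_eqw adj_sym adj_irr hx') Phi_cat.
  have [st [gs ex _ _]] := Phi_spec adj_sym adj_irr x.
  have nt : forall v, in_Gamma_r wbar r v -> ~~ tilehead v (pile adj st).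
    move=> v hv; rewrite -ex; exact: (perm_notile adj_sym adj_irr px).
  have [d' [hd' ed]] := act_A adj_sym adj_irr nt (c := c) (d := [::]) cA (fun _ F => match F with end).
  rewrite ex /= in e; rewrite ed in e.
  case: d' hd' ed e => [|l d''] hd' ed e.
    apply: nx; apply: (Phi_complete adj_sym adj_irr); by rewrite e ex.
  have := perm_notile adj_sym adj_irr px' (hd' l (or_introl erefl)).
  by rewrite e /tilehead /pile /= adj_irr /entry eqxx.
Qed.
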